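(* Let $\mu,\tau$ be distributions over $\{0,1\}^n$, let $T$ be a transfer distribution between $\mu$ and $\tau$ achieving $d_{EM}(\mu,\tau)=\mathbb{E}_{(x,y)\sim T}[d_H(x,y)]$, and let $\Xi$ be a distribution over $\{0,1\}^n\times\{0,1\}^n\times A$ ($A$ finite) with $\Xi|_{1,2}=T$. Let $\eta=\Xi|_3$, let $\Lambda^*$ be the type distribution of the detailing $\Xi|_{1,3}$ of $\mu$, and $\Upsilon^*$ the type distribution of the detailing $\Xi|_{2,3}$ of $\tau$. Then $d^\eta_{EM}(\Lambda^*,\Upsilon^* )\le d_{EM}(\mu,\tau)$.
   Context: $d_H$ is normalized Hamming distance and $d_{EM}(\mu,\tau)=\min_T\mathbb{E}_T[d_H]$ over transfer distributions (couplings with marginals $\mu,\tau$). For a detailing $\zeta$ (a distribution on $\{0,1\}^n\times A$), the type of $i\in[n]$ is $t_i(a)=\Pr_{x\sim\zeta|_1^{2:a}}[x_i=1]$ when $\zeta|_2(a)>0$ and $0$ otherwise, and the type distribution is the law of $t_{\mathbf i}$ for uniform $\mathbf i\in[n]$. $d^\eta_{\ell_1}(x,y)=\sum_a\eta(a)|x_a-y_a|$ and $d^\eta_{EM}$ is the Earth Mover distance over it. *)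

(* Defs.v *)
From mathcomp Require Import all_boot all_order all_algebra.
From mathcomp Require Import classical_sets reals.
Set Implicit Arguments. Unset Strict Implicit. Unset Printing Implicit Defensive.
Import Order.TTheory GRing.Theory Num.Theory.
Local Open Scope ring_scope.
Local Open Scope classical_set_scope.

Section Defs.
Variable R : realType.

Definition bvec (n : nat) := n.-tuple bool.

Definition dH (n : nat) (x y : bvec n) : R :=
  #|[set i : 'I_n | tnth x i != tnth y i]|%:R / n%:R.

Definition coupling_on (X : eqType) (P Q : X -> R) (pi : X -> X -> R)
  (s : seq (X * X)) : Prop :=
  [/\ uniq s,
      (forall x y, pi x y != 0 -> (x, y) \in s),
      (forall x y, 0 <= pi x y),
      (forall x, \sum_(p <- s | p.1 == x) pi p.1 p.2 = P x) &
      (forall y, \sum_(p <- s | p.2 == y) pi p.1 p.2 = Q y)].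

Definition dEM (X : eqType) (c : X -> X -> R) (P Q : X -> R) : R :=
  inf [set r | exists (pi : X -> X -> R) (s : seq (X * X)),
          coupling_on P Q pi s /\ r = \sum_(p <- s) pi p.1 p.2 * c p.1 p.2].

Definition dl1 (A : finType) (eta : A -> R) (v w : {ffun A -> R}) : R :=
  \sum_(a : A) eta a * `|v a - w a|.

Definition detail_marg2 (n : nat) (A : finType) (zeta : bvec n -> A -> R) (a : A) : R :=
  \sum_(x : bvec n) zeta x a.

Definition type_of (n : nat) (A : finType) (zeta : bvec n -> A -> R) (i : 'I_n)
  : {ffun A -> R} :=
  [ffun a => if 0 < detail_marg2 zeta a then
               (\sum_(x : bvec n | tnth x i) zeta x a) / detail_marg2 zeta a
             else 0].

Definition type_dist (n : nat) (A : finType) (zeta : bvec n -> A -> R)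
  (v : {ffun A -> R}) : R :=
  #|[set i : 'I_n | type_of zeta i == v]|%:R / n%:R.

End Defs.

(* Main.v *)
Require Import Defs.
From mathcomp Require Import all_boot all_order all_algebra.
From mathcomp Require Import classical_sets reals.
From mathcomp Require Import boolp.
Import Order.TTheory GRing.Theory Num.Theory.
Local Open Scope ring_scope.

Lemma card_sum (R : realType) (I : finType) (Q : pred I) :
  #|[set i | Q i]|%:R = \sum_i (Q i)%:R :> R.
Proof.
rewrite -sum1_card natr_sum big_mkcond /=; apply: eq_bigr => i _.
by rewrite inE; case: (Q i).
Qed.

Lemma card_sumC (R : realType) (I : finType) (Q : pred I) :
  #|([set i | Q i])%classic|%:R = \sum_i (Q i)%:R :> R.
Proof.
rewrite -sum1_card natr_sum big_mkcond /=; apply: eq_bigr => i _.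
by rewrite /in_mem /= /in_set asboolb; case: (Q i).
Qed.

Lemma sum_seq_pi (R : realType) (X : eqType) (I : finType) (q : I -> X)
  (s : seq X) (P : pred X) (F : X -> R) :
  uniq s -> (forall i, q i \in s) ->
  \sum_(p <- s | P p) (\sum_i (q i == p)%:R) * F p
  = \sum_i (if P (q i) then F (q i) else 0).
Proof.
move=> us qs.
under eq_bigr do rewrite mulr_suml.
rewrite exchange_big /=; apply: eq_bigr => i _.
transitivity (\sum_(p <- s | p == q i) (if P (q i) then F (q i) else 0)).
  rewrite big_mkcond /= [RHS]big_mkcond /=; apply: eq_bigr => p _.
  case: (eqVneq p (q i)) => [->|ne].
    by rewrite mul1r.
  by rewrite mul0r; case: (P p).
by rewrite -big_filter filter_pred1_uniq // big_seq1.
Qed.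

Theorem lemma5p5 (R : realType) (n : nat) (A : finType)
  (mu tau : bvec n -> R) (T : bvec n -> bvec n -> R)
  (Xi : bvec n -> bvec n -> A -> R) :
  (0 < n)%N ->
  (forall x, 0 <= mu x) -> \sum_x mu x = 1 ->
  (forall x, 0 <= tau x) -> \sum_x tau x = 1 ->
  (* T is a transfer distribution between mu and tau *)
  (forall x y, 0 <= T x y) ->
  (forall x, \sum_y T x y = mu x) ->
  (forall y, \sum_x T x y = tau y) ->
  (* T achieves the Earth Mover distance *)
  \sum_x \sum_y T x y * dH R x y = dEM (@dH R n) mu tau ->
  (* Xi is a distribution on {0,1}^n x {0,1}^n x A with Xi|_{1,2} = T *)
  (forall x y a, 0 <= Xi x y a) ->
  (forall x y, \sum_a Xi x y a = T x y) ->
  let eta := fun a => \sum_x \sum_y Xi x y a in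
  let zeta13 := fun x a => \sum_y Xi x y a in
  let zeta23 := fun y a => \sum_x Xi x y a in
  dEM (dl1 eta) (type_dist zeta13) (type_dist zeta23) <= dEM (@dH R n) mu tau.
Proof.
move=> n0 mu0 mu1 tau0 tau1 T0 Tmu Ttau hD Xi0 XiT.
cbv zeta.
set eta := (fun a : A => \sum_x \sum_y Xi x y a).
set z13 := (fun (x : bvec n) (a : A) => \sum_y Xi x y a).
set z23 := (fun (y : bvec n) (a : A) => \sum_x Xi x y a).
pose t := type_of z13; pose u := type_of z23.
pose q i := (t i, u i).
pose s := undup [seq q i | i <- enum 'I_n].
pose pi (v w : {ffun A -> R}) : R := #|[set i | (t i == v) && (u i == w)]|%:R / n%:R.
have us : uniq s := undup_uniq _.
have qs : forall i, q i \in s.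
  by move=> i; rewrite mem_undup; apply: map_f; rewrite mem_enum.
have piE : forall p, pi p.1 p.2 = (\sum_i (q i == p)%:R) / n%:R.
  case=> v w; rewrite /pi card_sum; congr (_ / _); apply: eq_bigr => i _.
have key : forall (P : pred ({ffun A -> R} * {ffun A -> R})) F,
    \sum_(p <- s | P p) pi p.1 p.2 * F p
    = (\sum_i (if P (q i) then F (q i) else 0)) / n%:R.
  move=> P F; under eq_bigr do rewrite piE mulrAC.
  by rewrite -big_distrl /= sum_seq_pi.
have n0R : 0 < n%:R :> R by rewrite ltr0n.
have eta0 : forall a, 0 <= eta a.
  by move=> a; apply: sumr_ge0 => x _; apply: sumr_ge0 => y _.
have cpl : coupling_on (type_dist z13) (type_dist z23) pi s.
  split => //.
  - move=> v w; case: (boolP ((v, w) \in s)) => // nin.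
    rewrite /pi (_ : [set i | _] = finset.set0) ?cards0 ?mul0r ?eqxx //.
    apply/setP => i; rewrite !inE; apply/negP => /andP[/eqP tv /eqP uw].
    by move: nin; rewrite -tv -uw qs.
  - by move=> v w; rewrite /pi divr_ge0 // ler0n.
  - move=> v; under eq_bigr do rewrite -[pi _ _]mulr1.
    rewrite (key (fun p => p.1 == v) (fun _ => 1)) /type_dist card_sumC.
    by congr (_ / _); apply: eq_bigr => i _; case: eqP.
  - move=> v; under eq_bigr do rewrite -[pi _ _]mulr1.
    rewrite (key (fun p => p.2 == v) (fun _ => 1)) /type_dist card_sumC.
    by congr (_ / _); apply: eq_bigr => i _; case: eqP.
have cost : \sum_(p <- s) pi p.1 p.2 * dl1 eta p.1 p.2 <= dEM (@dH R n) mu tau.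
  rewrite (key xpredT (fun p => dl1 eta p.1 p.2)) -hD /=.
  have rhsE : \sum_x \sum_y T x y * dH R x y =
      (\sum_i \sum_x \sum_y T x y * (tnth x i != tnth y i)%:R) / n%:R.
    symmetry; rewrite big_distrl /=.
    under eq_bigr => i _ do rewrite big_distrl /=.
    under eq_bigr => i _ do under eq_bigr => x _ do rewrite big_distrl /=.
    rewrite exchange_big /=.
    under eq_bigr => x _ do rewrite exchange_big /=.
    apply: eq_bigr => x _; apply: eq_bigr => y _.
    by rewrite /dH card_sumC mulrA mulr_sumr mulr_suml.
  rewrite rhsE; apply: ler_wpM2r; first by rewrite invr_ge0 ler0n.
  apply: ler_sum => i _.
  rewrite (_ : \sum_x \sum_y T x y * _ =
     \sum_a \sum_x \sum_y Xi x y a * (tnth x i != tnth y i)%:R); last first.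
    rewrite [RHS]exchange_big /=; apply: eq_bigr => x _.
    rewrite [RHS]exchange_big /=; apply: eq_bigr => y _.
    by rewrite -XiT big_distrl.
  rewrite /dl1; apply: ler_sum => a _.
  rewrite /t /u /type_of !ffunE.
  have m13 : detail_marg2 z13 a = eta a by [].
  have m23 : detail_marg2 z23 a = eta a.
    by rewrite /detail_marg2 /z23 /eta exchange_big.
  rewrite m13 m23; case: ifP => [ep|_]; last first.
    rewrite subrr normr0 mulr0; apply: sumr_ge0 => x _.
    by apply: sumr_ge0 => y _; apply: mulr_ge0.
  rewrite -mulrBl normrM normfV (gtr0_norm ep) mulrCA mulfV ?gt_eqF // mulr1.
  have PE : \sum_(x | tnth x i) z13 x a = \sum_x \sum_y Xi x y a * (tnth x i)%:R.
    rewrite big_mkcond /=; apply: eq_bigr => x _; rewrite /z13.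
    case: (tnth x i) => /=; first by apply: eq_bigr => ? _; rewrite mulr1n mulr1.
    by rewrite big1 // => y _; rewrite mulr0.
  have QE : \sum_(y | tnth y i) z23 y a = \sum_x \sum_y Xi x y a * (tnth y i)%:R.
    rewrite [RHS]exchange_big big_mkcond /=; apply: eq_bigr => y _; rewrite /z23.
    case: (tnth y i) => /=; first by apply: eq_bigr => ? _; rewrite mulr1n mulr1.
    by rewrite big1 // => x _; rewrite mulr0.
  rewrite PE QE -sumrB; apply: le_trans (ler_norm_sum _ _ _) _.
  apply: ler_sum => x _.
  rewrite -sumrB; apply: le_trans (ler_norm_sum _ _ _) _; apply: ler_sum => y _.
  rewrite -mulrBr normrM (ger0_norm (Xi0 x y a)).
  by case: (tnth x i); case: (tnth y i);
    rewrite /= ?subrr ?normr0 ?subr0 ?sub0r ?normrN ?normr1 ?mulr0 ?mulr1.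
have lb : has_lbound [set r | exists (pi : {ffun A -> R} -> {ffun A -> R} -> R) s,
          coupling_on (type_dist z13) (type_dist z23) pi s /\
          r = \sum_(p <- s) pi p.1 p.2 * dl1 eta p.1 p.2].
  exists 0 => r [pi' [s' [[_ _ pi0 _ _] ->]]].
  apply: sumr_ge0 => p _; apply: mulr_ge0 => //.
  by apply: sumr_ge0 => a _; apply: mulr_ge0.
apply: le_trans cost; apply: (ge_inf lb).
by exists pi, s.
Qed.
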